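(* Let $\mathcal{H}$ be a Hilbert space, $\mathcal{H}_1$ a closed subspace with $\{0\}\ne\mathcal{H}_1\ne\mathcal{H}$, $P:\mathcal{H}\to\mathcal{H}_1$ the orthogonal projection onto $\mathcal{H}_1$ (so $P^*:\mathcal{H}_1\to\mathcal{H}$ is the inclusion), $Q:\mathcal{H}\to\mathcal{H}_1^\perp$ the orthogonal projection onto $\mathcal{H}_1^\perp$, $H\ge 0$ a bounded selfadjoint operator on $\mathcal{H}$, and $H_t:=H+tQ^*Q$ for $t\ge0$. Then for $t\ge 2\|H+1\|^2$, $$\left\|(H_t+1)^{-1}-P^*(PHP^*+1)^{-1}P\right\|\le \frac{4\|H+1\|^2}{1+t}.$$ *)

(* Defs.v *)
From HB Require Import structures.
From mathcomp Require Import all_boot all_order all_algebra.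
From mathcomp Require Import all_classical all_reals.
From mathcomp Require Export complex.
Set Implicit Arguments. Unset Strict Implicit. Unset Printing Implicit Defensive.
Import Order.TTheory GRing.Theory Num.Theory.
Local Open Scope ring_scope.
Local Open Scope classical_set_scope.

Record is_inner_product (R : realType) (V : lmodType R[i])
    (ip : V -> V -> R[i]) : Prop := {
  ip_linear : forall (a : R[i]) (x y z : V), ip (a *: x + y) z = a * ip x z + ip y z;
  ip_conj   : forall x y : V, ip y x = conjc (ip x y);
  ip_ge0    : forall x : V, 0 <= ip x x;
  ip_def    : forall x : V, ip x x = 0 -> x = 0 }.

Definition inorm (R : realType) (V : lmodType R[i]) (ip : V -> V -> R[i])
  (x : V) : R := Num.sqrt (complex.Re (ip x x)).

Definition is_complete (R : realType) (V : lmodType R[i]) (ip : V -> V -> R[i]) : Prop :=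
  forall u : nat -> V,
    (forall e : R, 0 < e -> exists N : nat, forall m n : nat, (N <= m)%N -> (N <= n)%N ->
        inorm ip (u m - u n) < e) ->
    exists l : V, forall e : R, 0 < e -> exists N : nat, forall n : nat, (N <= n)%N ->
        inorm ip (u n - l) < e.

Definition is_hilbert (R : realType) (V : lmodType R[i]) (ip : V -> V -> R[i]) : Prop :=
  is_inner_product ip /\ is_complete ip.

Definition bounded_op (R : realType) (V W : lmodType R[i])
  (ipV : V -> V -> R[i]) (ipW : W -> W -> R[i]) (f : V -> W) : Prop :=
  exists M : R, forall x : V, inorm ipW (f x) <= M * inorm ipV x.

Definition opnorm (R : realType) (V W : lmodType R[i])
  (ipV : V -> V -> R[i]) (ipW : W -> W -> R[i]) (f : V -> W) : R :=
  sup [set inorm ipW (f x) | x in [set x : V | inorm ipV x <= 1]].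

Definition is_adjoint (R : realType) (V W : lmodType R[i])
  (ipV : V -> V -> R[i]) (ipW : W -> W -> R[i]) (f : V -> W) (g : W -> V) : Prop :=
  forall (x : V) (y : W), ipW (f x) y = ipV x (g y).

Definition is_isometry (R : realType) (V W : lmodType R[i])
  (ipV : V -> V -> R[i]) (ipW : W -> W -> R[i]) (f : V -> W) : Prop :=
  forall x y : V, ipW (f x) (f y) = ipV x y.

(* Main.v *)
Require Import Defs.
From HB Require Import structures.
From mathcomp Require Import all_boot all_order all_algebra.
From mathcomp Require Import all_classical all_reals.
From mathcomp Require Import complex.
From mathcomp Require Import ring lra.
Import Order.TTheory GRing.Theory Num.Theory.
Set Implicit Arguments. Unset Strict Implicit.
Local Open Scope ring_scope.
Local Notation Re := complex.Re.
Local Notation Im := complex.Im.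
Local Open Scope complex_scope.

Section Cx.
Variable R : realType.
Lemma ReD' (x y : R[i]) : Re (x + y) = Re x + Re y. Proof. by case: x; case: y. Qed.
Lemma ReN' (x : R[i]) : Re (- x) = - Re x. Proof. by case: x. Qed.
Lemma ReB' (x y : R[i]) : Re (x - y) = Re x - Re y. Proof. by rewrite ReD' ReN'. Qed.
Lemma Re0' : Re (0 : R[i]) = 0. Proof. by []. Qed.
Lemma ReJ' (x : R[i]) : Re (conjc x) = Re x. Proof. by case: x. Qed.
Lemma ReMr' (r : R) (x : R[i]) : Re (r%:C * x) = r * Re x.
Proof. by case: x => a b /=; rewrite mul0r subr0. Qed.
Lemma Rer' (r : R) : Re (r%:C) = r. Proof. by []. Qed.
Lemma conjr' (r : R) : conjc (r%:C) = r%:C. Proof. exact: conjc_real. Qed.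
Lemma conjD' (x y : R[i]) : conjc (x + y) = conjc x + conjc y.
Proof. by case: x => a b; case: y => c d /=; rewrite opprD. Qed.
Lemma conjN' (x : R[i]) : conjc (- x) = - conjc x.
Proof. by case: x. Qed.
Lemma conjM' (x y : R[i]) : conjc (x * y) = conjc x * conjc y.
Proof. exact: (rmorphM (@conjc R)). Qed.
Lemma conj0' : conjc (0 : R[i]) = 0.
Proof. by rewrite /= oppr0. Qed.
End Cx.

Section IP.
Variables (R : realType) (V : lmodType R[i]) (ip : V -> V -> R[i]).
Hypothesis hip : is_inner_product ip.

Lemma ipD x y z : ip (x + y) z = ip x z + ip y z.
Proof. by have := ip_linear hip 1 x y z; rewrite scale1r mul1r. Qed.
Lemma ip0 z : ip 0 z = 0.
Proof. have h := ipD 0 0 z; rewrite addr0 in h.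
by apply: (addrI (ip 0 z)); rewrite addr0 -h. Qed.
Lemma ipZ a x z : ip (a *: x) z = a * ip x z.
Proof. by have := ip_linear hip a x 0 z; rewrite addr0 ip0 addr0. Qed.
Lemma ipN x z : ip (- x) z = - ip x z.
Proof. by rewrite -scaleN1r ipZ mulN1r. Qed.
Lemma ipB x y z : ip (x - y) z = ip x z - ip y z.
Proof. by rewrite ipD ipN. Qed.
Lemma ipDr x y z : ip z (x + y) = ip z x + ip z y.
Proof. by rewrite (ip_conj hip (x + y) z) ipD conjD' -!(ip_conj hip). Qed.
Lemma ipNr x z : ip z (- x) = - ip z x.
Proof. by rewrite (ip_conj hip (- x) z) ipN conjN' -!(ip_conj hip). Qed.
Lemma ipBr x y z : ip z (x - y) = ip z x - ip z y.
Proof. by rewrite ipDr ipNr. Qed.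
Lemma ipZr a x z : ip z (a *: x) = conjc a * ip z x.
Proof. by rewrite (ip_conj hip (a *: x) z) ipZ conjM' -!(ip_conj hip). Qed.
Lemma ip0r z : ip z 0 = 0.
Proof. by rewrite (ip_conj hip 0 z) ip0 conj0'. Qed.

Definition n2 x := Re (ip x x).

Lemma n2_ge0 x : 0 <= n2 x.
Proof. by have := ip_ge0 hip x; rewrite lecE => /andP[]. Qed.
Lemma ipxx x : ip x x = (n2 x)%:C.
Proof. have := ger0_Im (ip_ge0 hip x); rewrite /n2; by case: (ip x x) => a b /= ->. Qed.
Lemma n2_eq0 x : n2 x = 0 -> x = 0.
Proof. by move=> h; apply: (ip_def hip); rewrite ipxx h. Qed.
Lemma Re_sym x y : Re (ip y x) = Re (ip x y).
Proof. by rewrite (ip_conj hip x y) ReJ'. Qed.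
Lemma n2D x y : n2 (x + y) = n2 x + n2 y + 2 * Re (ip x y).
Proof. rewrite /n2 ipD !ipDr !ReD' (Re_sym x y); lra. Qed.
Lemma n2N x : n2 (- x) = n2 x.
Proof. by rewrite /n2 ipN ipNr opprK. Qed.
Lemma n2B x y : n2 (x - y) = n2 x + n2 y - 2 * Re (ip x y).
Proof. rewrite n2D n2N ipNr ReN'; lra. Qed.
Lemma re_le x y : 2 * Re (ip x y) <= n2 x + n2 y.
Proof. have := n2_ge0 (x - y); rewrite n2B; lra. Qed.
Lemma n2D_le x y : n2 (x + y) <= 2 * n2 x + 2 * n2 y.
Proof. have := re_le x y; rewrite n2D; lra. Qed.
Lemma n2Zr (r : R) x : n2 (r%:C *: x) = r ^+ 2 * n2 x.
Proof. by rewrite /n2 ipZ ipZr ipxx conjr' -!rmorphM Rer' mulrA expr2. Qed.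
Lemma n2_0 : n2 0 = 0.
Proof. by rewrite /n2 ip0. Qed.
Lemma inorm_sq x : inorm ip x ^+ 2 = n2 x.
Proof. by rewrite /inorm sqr_sqrtr // n2_ge0. Qed.
Lemma inorm_ge0 x : 0 <= inorm ip x.
Proof. exact: sqrtr_ge0. Qed.
End IP.
Arguments n2 {R V} ip x.
Arguments inorm_ge0 {R V} ip x.

Lemma sq_le (R : realType) (x b : R) : 0 <= b -> x ^+ 2 <= b ^+ 2 -> x <= b.
Proof. move=> hb h; nra. Qed.
Lemma sq_le2 (R : realType) (x b : R) : 0 <= x -> x <= b -> x ^+ 2 <= b ^+ 2.
Proof. move=> hb h; nra. Qed.
Lemma rcD (R : realType) (a b : R) : (a + b)%:C = a%:C + b%:C.
Proof. by apply/eqP; rewrite eq_complex /= addr0 !eqxx. Qed.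
Lemma Re_ge0 (R : realType) (z : R[i]) : 0 <= z -> 0 <= Re z.
Proof. by rewrite lecE => /andP[]. Qed.

Unset Implicit Arguments. Set Strict Implicit.
Theorem proposition4p2
  (R : realType)
  (* the Hilbert space \mathcal{H} *)
  (V : lmodType R[i]) (ip : V -> V -> R[i]) (hV : is_hilbert ip)
  (* the closed subspace \mathcal{H}_1, realised as a Hilbert space K together with
     the inclusion J = P^* : K -> V (an isometry); P : V -> K is its adjoint *)
  (K : lmodType R[i]) (ipK : K -> K -> R[i]) (hK : is_hilbert ipK)
  (J : {linear K -> V}) (hJ : is_isometry ipK ip J)
  (P : {linear V -> K}) (hP : is_adjoint ip ipK P J)
  (* \mathcal{H}_1^\perp, realised as a Hilbert space L with inclusion Jq = Q^*
     whose range is exactly the orthogonal complement of the range of J;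
     Q : V -> L is its adjoint *)
  (L : lmodType R[i]) (ipL : L -> L -> R[i]) (hL : is_hilbert ipL)
  (Jq : {linear L -> V}) (hJq : is_isometry ipL ip Jq)
  (hJqrange : forall x : V, (exists l : L, x = Jq l) <-> (forall k : K, ip x (J k) = 0))
  (Q : {linear V -> L}) (hQ : is_adjoint ip ipL Q Jq)
  (* {0} <> \mathcal{H}_1 <> \mathcal{H} *)
  (hK0 : exists k : K, k <> 0)
  (hKV : exists x : V, forall k : K, x <> J k)
  (* H >= 0 bounded selfadjoint *)
  (H : {linear V -> V}) (hHb : bounded_op ip ip H)
  (hHsa : forall x y : V, ip (H x) y = ip x (H y))
  (hHpos : forall x : V, 0 <= ip (H x) x)
  (t : R) (ht0 : 0 <= t)
  (ht : 2 * (opnorm ip ip (fun x => H x + x)) ^+ 2 <= t)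
  (* Rt = (H_t + 1)^{-1}, where H_t = H + t Q^* Q *)
  (Rt : V -> V)
  (hRt1 : forall x : V, Rt (H x + (real_complex R t) *: Jq (Q x) + x) = x)
  (hRt2 : forall x : V, H (Rt x) + (real_complex R t) *: Jq (Q (Rt x)) + Rt x = x)
  (* B = (P H P^* + 1)^{-1} on \mathcal{H}_1 *)
  (B : K -> K)
  (hB1 : forall k : K, B (P (H (J k)) + k) = k)
  (hB2 : forall k : K, P (H (J (B k))) + B k = k) :
  opnorm ip ip (fun x => Rt x - J (B (P x)))
    <= 4 * (opnorm ip ip (fun x => H x + x)) ^+ 2 / (1 + t).
Proof.
have [hip _] := hV; have [hipK _] := hK; have [hipL _] := hL.
set a := opnorm ip ip (fun x => H x + x).
have PJ k : P (J k) = k.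
  apply/eqP; rewrite -subr_eq0; apply/eqP; apply: (ip_def hipK).
  by rewrite (ipB hipK) hP hJ subrr.
have QJq l : Q (Jq l) = l.
  apply/eqP; rewrite -subr_eq0; apply/eqP; apply: (ip_def hipL).
  by rewrite (ipB hipL) hQ hJq subrr.
have orth k l : ip (Jq l) (J k) = 0 by apply: (proj1 (hJqrange (Jq l))); exists l.
have orth' k l : ip (J k) (Jq l) = 0 by rewrite (ip_conj hip (Jq l) (J k)) orth conj0'.
have QJ k : Q (J k) = 0 by apply: (ip_def hipL); rewrite hQ orth'.
have PJq l : P (Jq l) = 0 by apply: (ip_def hipK); rewrite hP orth.
have decomp x : x = J (P x) + Jq (Q x).
  have [l hl] : exists l, x - J (P x) = Jq l.
    by apply/hJqrange => k; rewrite (ipB hip) hJ hP subrr.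
  have : Q (x - J (P x)) = l by rewrite hl QJq.
  rewrite linearB /= QJ subr0 => ->.
  by rewrite -hl addrC subrK.
have pyth k l : n2 ip (J k + Jq l) = n2 ipK k + n2 ipL l.
  by rewrite (n2D hip) orth' Re0' mulr0 addr0 /n2 hJ hJq.
have n2P x : n2 ipK (P x) <= n2 ip x.
  by rewrite {2}(decomp x) pyth lerDl (n2_ge0 hipL).
have n2Q x : n2 ipL (Q x) <= n2 ip x.
  by rewrite {2}(decomp x) pyth lerDr (n2_ge0 hipK).
have [M hM] := hHb.
have hS : has_ubound [set inorm ip (H x + x) | x in [set x : V | inorm ip x <= 1]].
  exists (Num.sqrt (2 * M ^+ 2 + 2)) => _ [x hx <-].
  rewrite /inorm ler_sqrt; last by nra.
  have := n2D_le hip (H x) x.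
  have := hM x; have := inorm_ge0 ip (H x); have := inorm_ge0 ip x.
  rewrite -(inorm_sq hip x) -(inorm_sq hip (H x)) /n2 /=.
  move: hx; rewrite /= => hx h0 h1 h2.
  have h3 := sq_le2 h1 h2. have h4 := sq_le2 h0 hx.
  rewrite expr1n in h4. rewrite exprMn in h3.
  have h5 : M ^+ 2 * inorm ip x ^+ 2 <= M ^+ 2 by rewrite ler_piMr // sqr_ge0.
  lra.
have supub x : inorm ip x <= 1 -> inorm ip (H x + x) <= a.
  by move=> hx; apply: (ub_le_sup hS); exists x.
have inorm0 : inorm ip 0 = 0 by rewrite /inorm (ip0 hip) Re0' sqrtr0.
have a0 : 0 <= a.
  by apply: le_trans (supub 0 _); [apply: inorm_ge0 | rewrite inorm0].
have hA y : n2 ip (H y + y) <= a ^+ 2 * n2 ip y.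
  have [y0|y0] := eqVneq (n2 ip y) 0.
    by rewrite (n2_eq0 hip y0) linear0 addr0 (n2_0 hip) mulr0.
  have ny0 : 0 < n2 ip y by rewrite lt_neqAle eq_sym y0 (n2_ge0 hip).
  set s := Num.sqrt (n2 ip y).
  have s0 : 0 < s by rewrite sqrtr_gt0.
  have ss : s ^+ 2 = n2 ip y by rewrite sqr_sqrtr // ltW.
  have e : s ^+ 2 * s^-1 ^+ 2 = 1 by rewrite -exprMn mulfV ?expr1n // gt_eqF.
  set z := (s^-1)%:C *: y.
  have nz : inorm ip z <= 1.
    by rewrite /inorm -/(n2 ip z) (n2Zr hip) -ss mulrC e sqrtr1.
  have hz : H z + z = (s^-1)%:C *: (H y + y) by rewrite linearZ scalerDr.
  have := sq_le2 (inorm_ge0 ip _) (supub z nz).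
  rewrite (inorm_sq hip) hz (n2Zr hip) => h.
  have -> : n2 ip (H y + y) = s ^+ 2 * (s^-1 ^+ 2 * n2 ip (H y + y)) by rewrite mulrA e mul1r.
  rewrite -ss mulrC; apply: ler_wpM2r => //; exact: sqr_ge0.
have hA' y : n2 ip (H y) + n2 ip y <= n2 ip (H y + y).
  by rewrite (n2D hip) lerDl mulr_ge0 // Re_ge0.
have a1 : 1 <= a ^+ 2.
  have [k k0] := hK0.
  have ny : 0 < n2 ip (J k).
    rewrite lt_neqAle (n2_ge0 hip) andbT eq_sym; apply/eqP => /(n2_eq0 hip) h.
    by apply: k0; rewrite -(PJ k) h linear0.
  have := le_trans (hA' (J k)) (hA (J k)).
  have := n2_ge0 hip (H (J k)). nra.
have hH y : n2 ip (H y) <= a ^+ 2 * n2 ip y.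
  have := le_trans (hA' y) (hA y); have := n2_ge0 hip y; lra.
have Blin c d : B c - B d = B (c - d).
  have e : P (H (J (B c - B d))) + (B c - B d) = c - d.
    by rewrite !linearB /= addrACA -opprD !hB2.
  by rewrite -e hB1.
have Bc d : n2 ipK (B d) <= n2 ipK d.
  have h := re_le hipK d (B d).
  have : Re (ipK d (B d)) = Re (ip (H (J (B d))) (J (B d))) + n2 ipK (B d).
    by rewrite -{1}(hB2 d) (ipD hipK) ReD' hP.
  have := Re_ge0 (hHpos (J (B d))). lra.
have main x : (1 + t) ^+ 2 * n2 ip (Rt x - J (B (P x))) <= 16 * a ^+ 4 * n2 ip x.
  set u := Rt x.
  have eq : H u + t%:C *: Jq (Q u) + u = x by exact: hRt2.
  have nu : n2 ip u <= n2 ip x.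
    have h := re_le hip x u.
    have : Re (ip x u) = Re (ip (H u) u) + t * n2 ipL (Q u) + n2 ip u.
      rewrite -{1}eq !(ipD hip) (ipZ hip) !ReD' ReMr' (Re_sym hip u (Jq _)) -hQ //.
    have := Re_ge0 (hHpos u). have := mulr_ge0 ht0 (n2_ge0 hipL (Q u)). lra.
  have eQ : (1 + t)%:C *: Q u = Q (x - H u).
    rewrite -eq !linearD linearZ /= QJq rcD scalerDl scale1r.
    rewrite linearN; set p := Q u; set q := Q (H u); set r := t%:C *: p.
    by rewrite [RHS]addrC !addrA addNr add0r addrC.
  have nQ : (1 + t) ^+ 2 * n2 ipL (Q u) <= 2 * (1 + a ^+ 2) * n2 ip x.
    rewrite -(n2Zr hipL) eQ.
    apply: le_trans (n2Q _) _.
    apply: le_trans (n2D_le hip _ _) _.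
    rewrite (n2N hip).
    have := hH u. have := n2_ge0 hip x. nra.
  set m := P (H (Jq (Q u))).
  have eP : P (H (J (P u))) + P u = P x - m.
    have := congr1 P eq; rewrite !linearD linearZ /= PJq scaler0 addr0.
    rewrite {1}(decomp u) linearD linearD /= -/m => <-.
    by rewrite addrAC addrK.
  have ev : P u - B (P x) = B (- m).
    by rewrite -{1}(hB1 (P u)) eP Blin addrAC subrr add0r.
  have nv : n2 ipK (P u - B (P x)) <= a ^+ 2 * n2 ipL (Q u).
    rewrite ev; apply: le_trans (Bc _) _; rewrite (n2N hipK).
    apply: le_trans (n2P _) _. apply: le_trans (hH _) _.
    by rewrite /n2 hJq.
  have ew : u - J (B (P x)) = J (P u - B (P x)) + Jq (Q u).
    by rewrite {1}(decomp u) linearB /= addrAC.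
  rewrite ew pyth.
  set v := n2 ipK _ in nv *; set q := n2 ipL (Q u) in nv nQ *.
  have q0 : 0 <= q by apply: n2_ge0 hipL _.
  have X0 := n2_ge0 hip x.
  have h1 : (1 + t) ^+ 2 * (v + q) <= (a ^+ 2 + 1) * ((1 + t) ^+ 2 * q).
    rewrite mulrCA; apply: ler_wpM2l; first exact: sqr_ge0.
    rewrite mulrDl mul1r; lra.
  have h2 : (a ^+ 2 + 1) * ((1 + t) ^+ 2 * q) <= (a ^+ 2 + 1) * (2 * (1 + a ^+ 2) * n2 ip x).
    by apply: ler_wpM2l => //; lra.
  have h3 : (a ^+ 2 + 1) * (2 * (1 + a ^+ 2)) <= 16 * a ^+ 4.
    have -> : a ^+ 4 = a ^+ 2 * a ^+ 2 by rewrite -exprD.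
    move: a1; set A := a ^+ 2 => a1; nra.
  apply: le_trans h1 _; apply: le_trans h2 _.
  rewrite mulrA; apply: ler_wpM2r => //.
have t1 : 0 < 1 + t by lra.
apply: ge_sup.
  by exists (inorm ip (Rt 0 - J (B (P 0)))), 0 => //=; rewrite inorm0.
move=> _ [x hx <-]; rewrite /= in hx.
rewrite ler_pdivlMr //.
apply: sq_le; first by rewrite mulr_ge0 // sqr_ge0.
rewrite exprMn (inorm_sq hip) mulrC.
apply: le_trans (main x) _.
have -> : (4 * a ^+ 2) ^+ 2 = 16 * a ^+ 4 by ring.
have := sq_le2 (inorm_ge0 ip x) hx; rewrite (inorm_sq hip) expr1n => hx2.
rewrite -[X in _ <= X]mulr1; apply: ler_wpM2l => //.
by rewrite mulr_ge0 // exprn_ge0.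
Qed.
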